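(* Let $n\geq 6$ and $a\geq 2$ be integers with $n\equiv a \pmod 2$, and let $k=\frac{n-a-2}{2}\geq 1$. Let $K_{2,a}\bullet F_k$ be the graph obtained by identifying a vertex of $K_{2,a}$ belonging to the part of size $a$ with the vertex of $F_k$ that is adjacent to every other vertex of $F_k$, and let $K_{2,a}* F_k$ be the graph obtained by identifying a vertex of $K_{2,a}$ belonging to the part of size $2$ with the vertex of $F_k$ that is adjacent to every other vertex of $F_k$. Then $$\rho(K_{2,a}\bullet F_{k})< \sqrt{2n-4}\quad\text{and}\quad \rho(K_{2,a} * F_{k})< \sqrt{2n-4}.$$
   Context: All graphs are simple and undirected. $K_{2,a}$ is the complete bipartite graph with parts of sizes $2$ and $a$. The friendship graph $F_k$ is the graph consisting of $k$ edge-disjoint triangles that all share a single common vertex (the vertex adjacent to all others). $\rho(G)$ denotes the spectral radius (largest adjacency eigenvalue) of $G$. *)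

(* Defs.v *)
From HB Require Import structures.
From mathcomp Require Import all_boot all_order all_algebra.
From mathcomp Require Import all_classical all_reals.
Set Implicit Arguments. Unset Strict Implicit. Unset Printing Implicit Defensive.
Import Order.TTheory GRing.Theory Num.Theory.
Local Open Scope classical_set_scope.
Local Open Scope ring_scope.

(* Vertex labelling (natural numbers, n = a + 2k + 2 vertices 0..n-1):
   - 0, 1            : the part of size 2 of K_{2,a}
   - 2, ..., a+1     : the part of size a of K_{2,a}
   - a+2, ..., a+2k+1: the non-central vertices of F_k, where the triangles
                       are {c, a+2+2t, a+3+2t} for t < k,
   and c is the vertex of K_{2,a} identified with the centre of F_k. *)

Definition K2a_arc (a : nat) (i j : nat) : bool :=
  ((i < 2) && (2 <= j < a + 2))%N.

Definition Fk_arc (a k c : nat) (i j : nat) : bool :=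
  [|| (i == c) && (a + 2 <= j < a + 2 * k + 2)%N
    | [&& (a + 2 <= i < a + 2 * k + 2)%N, (a + 2 <= j < a + 2 * k + 2)%N,
          i != j & ((i - (a + 2))./2 == (j - (a + 2))./2)%N] ].

Definition glued_edge (a k c : nat) (i j : nat) : bool :=
  [|| K2a_arc a i j, K2a_arc a j i, Fk_arc a k c i j | Fk_arc a k c j i].

(* K_{2,a} • F_k : centre of F_k identified with vertex 2 (part of size a) *)
Definition bullet_edge (a k : nat) := glued_edge a k 2.
(* K_{2,a} * F_k : centre of F_k identified with vertex 0 (part of size 2) *)
Definition star_edge (a k : nat) := glued_edge a k 0.

Definition adj_mx (R : nzRingType) (n : nat) (e : nat -> nat -> bool) : 'M[R]_n :=
  \matrix_(i < n, j < n) (e (nat_of_ord i) (nat_of_ord j))%:R.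

Definition spectral_radius (R : realType) (n : nat) (A : 'M[R]_n) : R :=
  sup [set x : R | eigenvalue A x].

(* Main.v *)
Require Import Defs.
From HB Require Import structures.
From mathcomp Require Import all_boot all_order all_algebra.
From mathcomp Require Import all_classical all_reals.
From mathcomp Require Import zify.
From mathcomp.algebra_tactics Require Import ring lra.
Import Order.TTheory GRing.Theory Num.Theory.
Local Open Scope ring_scope.

Lemma eig_le (R : realType) n (A : 'M[R]_n) (w : 'I_n -> R) mu l :
 (forall i j, 0 <= A i j) -> (forall i, 0 < w i) ->
 (forall j, \sum_i w i * A i j <= mu * w j) -> eigenvalue A l -> l <= mu.
Proof.
move=> A0 w0 Hw /eigenvalueP [v Hv v0].
have [j0 vj0] : exists j, v 0 j != 0.
  apply/existsP; apply: contraT; rewrite negb_exists => /forallP H.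
  case/negP: v0; apply/eqP/rowP => j; rewrite mxE; apply/eqP.
  by move: (H j); rewrite negbK.
case: (arg_maxP (fun j => `|v 0 j| / w j) (isT : predT j0)) => j _ Hj.
have Hi : forall i, `|v 0 i| <= `|v 0 j| / w j * w i.
  move=> i; have X : `|v 0 i| / w i <= `|v 0 j| / w j := Hj i isT.
  by rewrite -ler_pdivrMr.
have vjpos : 0 < `|v 0 j|.
  have H : `|v 0 j0| / w j0 <= `|v 0 j| / w j := Hj j0 isT.
  have H' : 0 < `|v 0 j0| / w j0 by rewrite divr_gt0 // normr_gt0.
  have := lt_le_trans H' H.
  by rewrite pmulr_lgt0 // invr_gt0.
have key : `|l| * `|v 0 j| <= mu * `|v 0 j|.
  have E : l * v 0 j = \sum_i v 0 i * A i j.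
    have := congr1 (fun M : 'rV[R]_n => M 0 j) Hv; rewrite !mxE => <-.
    by apply: eq_bigr => i _.
  rewrite -normrM E.
  apply: (le_trans (ler_norm_sum _ _ _)).
  apply: (@le_trans _ _ (\sum_i `|v 0 j| / w j * (w i * A i j))).
    apply: ler_sum => i _; rewrite normrM (ger0_norm (A0 i j)) mulrA.
    by apply: ler_wpM2r => //.
  rewrite -mulr_sumr.
  apply: (@le_trans _ _ (`|v 0 j| / w j * (mu * w j))).
    by apply: ler_wpM2l => //; rewrite divr_ge0 // ltW.
  by rewrite (mulrC mu) mulrA divfK ?gt_eqF // mulrC.
rewrite ler_pM2r // in key.
exact: le_trans (ler_norm l) key.
Qed.


Lemma count_range n lo hi :
  (\sum_(i < n) ((lo <= i < hi)%N : nat) = minn n hi - minn n lo)%N.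
Proof.
elim: n => [|n IH]; first by rewrite big_ord0; lia.
rewrite big_ord_recr /= IH.
case h: (lo <= n < hi)%N => /=; lia.
Qed.

Lemma count_pred n (P : 'I_n -> bool) lo hi c : (lo <= hi <= n)%N ->
  (forall i : 'I_n, P i = (lo <= i < hi)%N) -> c = (hi - lo)%N ->
  (\sum_(i < n) (P i : nat) = c)%N.
Proof.
move=> h HP ->; rewrite (eq_bigr (fun i : 'I_n => ((lo <= i < hi)%N : nat))).
  by rewrite count_range; lia.
by move=> i _; rewrite HP.
Qed.

Definition cls4 (R : nzRingType) (p1 p2 p3 : nat) (x0 x1 x2 x3 : R) (i : nat) : R :=
  if (i < p1)%N then x0 else if (i < p2)%N then x1 else if (i < p3)%N then x2 else x3.

Arguments cls4 {R}.
Lemma cls4E (R : nzRingType) p1 p2 p3 (x0 x1 x2 x3 : R) i : (p1 <= p2 <= p3)%N ->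
  cls4 p1 p2 p3 x0 x1 x2 x3 i = x0 * ((i < p1)%N : nat)%:R + x1 * ((p1 <= i < p2)%N : nat)%:R
   + x2 * ((p2 <= i < p3)%N : nat)%:R + x3 * ((p3 <= i)%N : nat)%:R.
Proof.
move=> h; rewrite /cls4.
have [h1|h1] : (i < p1)%N \/ (p1 <= i)%N by lia.
  have -> : (p1 <= i < p2)%N = false by lia.
  have -> : (p2 <= i < p3)%N = false by lia.
  have -> : (p3 <= i)%N = false by lia.
  by rewrite ?h1 /= !mulr0 !addr0 mulr1.
have [h2|h2] : (i < p2)%N \/ (p2 <= i)%N by lia.
  have -> : (p1 <= i < p2)%N = true by lia.
  have -> : (p2 <= i < p3)%N = false by lia.
  have -> : (p3 <= i)%N = false by lia.
  have -> : (i < p1)%N = false by lia.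
  by rewrite ?h2 /= !mulr0 !addr0 add0r mulr1.
have [h3|h3] : (i < p3)%N \/ (p3 <= i)%N by lia.
  have -> : (p1 <= i < p2)%N = false by lia.
  have -> : (p2 <= i < p3)%N = true by lia.
  have -> : (p3 <= i)%N = false by lia.
  have -> : (i < p1)%N = false by lia.
  have -> : (i < p2)%N = false by lia.
  by rewrite ?h3 /= !mulr0 !addr0 !add0r mulr1.
have -> : (p1 <= i < p2)%N = false by lia.
have -> : (p2 <= i < p3)%N = false by lia.
have -> : (i < p1)%N = false by lia.
have -> : (i < p2)%N = false by lia.
have -> : (i < p3)%N = false by lia.
by rewrite ?h3 /= !mulr0 !add0r mulr1.
Qed.

Lemma sum4 (R : nzRingType) n p1 p2 p3 (x0 x1 x2 x3 : R) (b : nat -> bool) c0 c1 c2 c3 :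
  (p1 <= p2 <= p3)%N ->
  (\sum_(i < n) (((i < p1)%N && b i) : nat) = c0)%N ->
  (\sum_(i < n) (((p1 <= i < p2)%N && b i) : nat) = c1)%N ->
  (\sum_(i < n) (((p2 <= i < p3)%N && b i) : nat) = c2)%N ->
  (\sum_(i < n) (((p3 <= i)%N && b i) : nat) = c3)%N ->
  \sum_(i < n) cls4 p1 p2 p3 x0 x1 x2 x3 i * (b i : nat)%:R =
  x0 * c0%:R + x1 * c1%:R + x2 * c2%:R + x3 * c3%:R.
Proof.
move=> h <- <- <- <-; rewrite !natr_sum !mulr_sumr -!big_split /=.
apply: eq_bigr => i _; rewrite cls4E // !mulrDl -!mulrA -!natrM !mulnb.
by [].
Qed.


Lemma star_w (R : realFieldType) (A K s : R) : 2 <= A -> 1 <= K -> 0 < s -> s^+2 = 2*A + 4*K ->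
 exists x0 x1 y z : R, [/\ 0 < x0, 0 < x1, 0 < y & 0 < z] /\ [/\
   A * y + 2*K * z < s * x0, A * y < s * x1, x0 + x1 < s * y & x0 + z < s * z].
Proof.
move=> hA hK hs hs2.
have s1 : 1 < s by nra.
have s1' : s - 1 != 0 by rewrite subr_eq0 gt_eqF.
have hD : 0 < A + 4*K by lra.
have hD' : A + 4*K != 0 by rewrite gt_eqF.
have [M eM] : exists M, M = s - A*s/(A + 4*K) - 2*K/(s-1) by eexists.
have hM : M * ((A + 4*K)*(s-1)) = 2*K*(2*s^+2 - 2*s - (A + 4*K)).
  by rewrite eM; field; rewrite s1' hD'.
have hpos : 0 < 2*s^+2 - 2*s - (A + 4*K).
  have : 2 * s < 3*A + 4*K by nra.
  lra.
have Mpos : 0 < M.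
  have : 0 < M * ((A + 4*K)*(s-1)) by rewrite hM; apply: mulr_gt0 => //; lra.
  by rewrite pmulr_lgt0 // mulr_gt0 // subr_gt0.
have hAK : A + 2*K != 0 by rewrite gt_eqF //; lra.
have [al eal] : exists al, al = M / (2*(A+2*K)) by eexists.
have hal : 0 < al by rewrite eal divr_gt0 //; lra.
exists 1, (A/(A + 4*K) + s*al/2), (s/(A + 4*K) + al), (1/(s-1) + al).
have hsD : 0 < s/(A + 4*K) by rewrite divr_gt0.
have hAD : 0 < A/(A + 4*K) by rewrite divr_gt0 //; lra.
have hs1 : 0 < 1/(s-1) by rewrite divr_gt0 // subr_gt0.
split; split.
- lra.
- have : 0 < s * al by rewrite mulr_gt0.
  lra.
- lra.
- lra.
- have E : A * (s/(A + 4*K) + al) + 2*K * (1/(s-1) + al) = s - M/2.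
    by rewrite eal eM; field; rewrite s1' hD' hAK.
  rewrite E; lra.
- have E : s * (A/(A + 4*K) + s*al/2) - A * (s/(A + 4*K) + al) = al * (s^+2/2 - A).
    by field; rewrite hD'.
  have : 0 < al * (s^+2/2 - A) by rewrite hs2 mulr_gt0 //; lra.
  rewrite -E; lra.
- have E : s * (s/(A + 4*K) + al) - (1 + (A/(A + 4*K) + s*al/2)) = (s^+2 - (A + 4*K) - A)/(A + 4*K) + s*al/2.
    by field; rewrite hD'.
  have : 0 < s * al by rewrite mulr_gt0.
  have Z : s^+2 - (A + 4*K) - A = 0 by rewrite hs2; ring.
  rewrite Z in E.
  rewrite mul0r add0r in E.
  lra.
- have E : s * (1/(s-1) + al) - (1 + (1/(s-1) + al)) = (s-1)*al.
    by field; rewrite s1'.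
  have : 0 < (s-1) * al by rewrite mulr_gt0 // subr_gt0.
  lra.
Qed.

Lemma bullet_w (R : realFieldType) (A K s : R) : 2 <= A -> 1 <= K -> 0 < s -> s^+2 = 2*A + 4*K ->
 exists x c y z : R, [/\ 0 < x, 0 < c, 0 < y & 0 < z] /\ [/\
   c + (A - 1) * y < s * x, 2 * x + 2*K * z < s * c, 2 * x < s * y & c + z < s * z].
Proof.
move=> hA hK hs hs2.
have s1 : 1 < s by nra.
have s1' : s - 1 != 0 by rewrite subr_eq0 gt_eqF.
have s0' : s != 0 by rewrite gt_eqF.
have hE : 0 < 4*K + 2 by lra.
have hE' : 4*K + 2 != 0 by rewrite gt_eqF.
have [N eN] : exists N, N = s - 2*s/(4*K+2) - 2*K/(s-1) by eexists.
have hN : N * ((4*K+2)*(s-1)) = 2*K*(2*s^+2 - 2*s - (4*K+2)).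
  by rewrite eN; field; rewrite s1' hE'.
have hpos : 0 < 2*s^+2 - 2*s - (4*K+2).
  have : s < 2*A + 2*K - 1 by nra.
  lra.
have Npos : 0 < N.
  have : 0 < N * ((4*K+2)*(s-1)) by rewrite hN; apply: mulr_gt0 => //; lra.
  by rewrite pmulr_lgt0 // mulr_gt0 // subr_gt0.
have hG : 0 < (2*A+2*K-1)/s + 2*K by have := divr_gt0 (_ : 0 < 2*A+2*K-1) hs; lra.
have hG' : (2*A+2*K-1)/s + 2*K != 0 by rewrite gt_eqF.
have [g eg] : exists g, g = N / (2*((2*A+2*K-1)/s + 2*K)) by eexists.
have hg : 0 < g by rewrite eg divr_gt0 //; lra.
have [b eb] : exists b, b = g * (2*A+2*K-1)/(2*s) by eexists.
have hb : 0 < b by rewrite eb !divr_gt0 ?mulr_gt0 //; lra.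
exists (s/(4*K+2) + b), 1, (2/(4*K+2) + g), (1/(s-1) + g).
have hsE : 0 < s/(4*K+2) by rewrite divr_gt0.
have h2E : 0 < 2/(4*K+2) by rewrite divr_gt0.
have hs1 : 0 < 1/(s-1) by rewrite divr_gt0 // subr_gt0.
split; split.
- lra.
- lra.
- lra.
- lra.
- have E : s * (s/(4*K+2) + b) - (1 + (A - 1) * (2/(4*K+2) + g))
         = (s^+2 - (4*K+2) - 2*A + 2)/(4*K+2) + g*(2*K+1)/2.
    by rewrite eb; field; rewrite s0' hE'.
  have Z : s^+2 - (4*K+2) - 2*A + 2 = 0 by rewrite hs2; ring.
  rewrite Z mul0r add0r in E.
  have : 0 < g*(2*K+1)/2 by rewrite divr_gt0 ?mulr_gt0 //; lra.
  lra.
- have E : 2 * (s/(4*K+2) + b) + 2*K * (1/(s-1) + g) = s - N/2.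
    rewrite eb eg eN; field; rewrite s0' s1' hE' /=; rewrite gt_eqF //; nra.
  rewrite E; lra.
- have E : s * (2/(4*K+2) + g) - 2 * (s/(4*K+2) + b) = g * (s^+2 - (2*A+2*K-1))/s.
    by rewrite eb; field; rewrite s0' hE'.
  rewrite hs2 in E.
  have : 0 < g * (2*A + 4*K - (2*A+2*K-1))/s by rewrite divr_gt0 ?mulr_gt0 //; lra.
  lra.
- have E : s * (1/(s-1) + g) - (1 + (1/(s-1) + g)) = (s-1)*g.
    by field; rewrite s1'.
  have : 0 < (s-1) * g by rewrite mulr_gt0 // subr_gt0.
  lra.
Qed.

Lemma rho_lt (R : realType) n (e : nat -> nat -> bool) (w : 'I_n -> R) s :
  0 < s -> (forall i, 0 < w i) ->
  (forall j : 'I_n, \sum_(i < n) w i * (e i j : nat)%:R < s * w j) ->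
  spectral_radius (adj_mx R n e) < s.
Proof.
move=> hs hw H.
pose A := adj_mx R n e.
pose F := fun j => (\sum_(i < n) w i * A i j) / w j.
have FE : forall j, \sum_(i < n) w i * A i j = \sum_(i < n) w i * (e i j : nat)%:R.
  by move=> j; apply: eq_bigr => i _; rewrite /A mxE.
have Fs : forall j, F j < s by move=> j; rewrite /F ltr_pdivrMr // FE.
pose mu := \big[Num.max/0]_j F j.
have mus : mu < s.
  by apply: (big_ind (fun x => x < s)) => // x y xs ys; rewrite gt_max xs ys.
have Fmu : forall j, F j <= mu by move=> j; rewrite /mu (bigD1 j) //= le_max lexx.
have Hw : forall j, \sum_i w i * A i j <= mu * w j.
  by move=> j; rewrite -ler_pdivrMr //; apply: Fmu.
have ub : forall l, eigenvalue A l -> l <= mu.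
  move=> l; apply: eig_le => // i j; rewrite /A mxE; exact: ler0n.
rewrite /spectral_radius.
case: (pselect ([set x : R | eigenvalue (adj_mx R n e) x] !=set0)%classic) => [ne|ne].
  apply: (le_lt_trans _ mus); apply: ge_sup => // x; exact: ub.
have -> : [set x : R | eigenvalue (adj_mx R n e) x]%classic = set0.
  apply/seteqP; split=> x //= Hx; exfalso; apply: ne; by exists x.
by rewrite sup0.
Qed.

Lemma cls4_pos (R : realDomainType) p1 p2 p3 (x0 x1 x2 x3 : R) i :
  0 < x0 -> 0 < x1 -> 0 < x2 -> 0 < x3 -> 0 < cls4 p1 p2 p3 x0 x1 x2 x3 i.
Proof. by move=> *; rewrite /cls4; repeat case: ifP. Qed.

Ltac edge_tac a j := let i := fresh "i" in intro i; have := ltn_ord i;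
  rewrite /star_edge /bullet_edge /glued_edge /K2a_arc /Fk_arc;
  case: (ltnP i (a + 2)) => ?; case: (ltnP j (a + 2)) => ? /=; move=> ?; apply/idP/idP; lia.

Lemma b01 (R : nzRingType) n a k (x0 x1 x2 x3 : R) (j : 'I_n) :
  n = (a + 2 * k + 2)%N -> (1 < a)%N -> (0 < k)%N -> (j < 2)%N ->
  \sum_(i < n) cls4 2 3 (a + 2) x0 x1 x2 x3 i * (bullet_edge a k i j : nat)%:R =
  x0 * (0)%:R + x1 * (1)%:R + x2 * (a - 1)%:R + x3 * (0)%:R /\
  cls4 2 3 (a + 2) x0 x1 x2 x3 j = x0.
Proof.
move=> hn ha hk hj; have jn := ltn_ord j; split; last first.
  rewrite /cls4; by rewrite hj.
rewrite (@sum4 _ _ _ _ _ _ _ _ _ (fun i => bullet_edge a k i j) (0) (1) (a - 1) (0)); first last.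
+ by apply: (@count_pred _ _ 0 0); [lia | edge_tac a j | lia].
+ by apply: (@count_pred _ _ 3 (a + 2)); [lia | edge_tac a j | lia].
+ by apply: (@count_pred _ _ 2 3); [lia | edge_tac a j | lia].
+ by apply: (@count_pred _ _ 0 0); [lia | edge_tac a j | lia].
+ lia.
by [].
Qed.

Lemma b2 (R : nzRingType) n a k (x0 x1 x2 x3 : R) (j : 'I_n) :
  n = (a + 2 * k + 2)%N -> (1 < a)%N -> (0 < k)%N -> (2 <= j < 3)%N ->
  \sum_(i < n) cls4 2 3 (a + 2) x0 x1 x2 x3 i * (bullet_edge a k i j : nat)%:R =
  x0 * (2)%:R + x1 * (0)%:R + x2 * (0)%:R + x3 * (2 * k)%:R /\
  cls4 2 3 (a + 2) x0 x1 x2 x3 j = x1.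
Proof.
move=> hn ha hk hj; have jn := ltn_ord j; split; last first.
  rewrite /cls4; have -> : (j < 2)%N = false by lia. by have -> : (j < 3)%N = true by lia.
rewrite (@sum4 _ _ _ _ _ _ _ _ _ (fun i => bullet_edge a k i j) (2) (0) (0) (2 * k)); first last.
+ by apply: (@count_pred _ _ (a + 2) n); [lia | edge_tac a j | lia].
+ by apply: (@count_pred _ _ 0 0); [lia | edge_tac a j | lia].
+ by apply: (@count_pred _ _ 0 0); [lia | edge_tac a j | lia].
+ by apply: (@count_pred _ _ 0 2); [lia | edge_tac a j | lia].
+ lia.
by [].
Qed.

Lemma b3 (R : nzRingType) n a k (x0 x1 x2 x3 : R) (j : 'I_n) :
  n = (a + 2 * k + 2)%N -> (1 < a)%N -> (0 < k)%N -> (3 <= j < a + 2)%N ->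
  \sum_(i < n) cls4 2 3 (a + 2) x0 x1 x2 x3 i * (bullet_edge a k i j : nat)%:R =
  x0 * (2)%:R + x1 * (0)%:R + x2 * (0)%:R + x3 * (0)%:R /\
  cls4 2 3 (a + 2) x0 x1 x2 x3 j = x2.
Proof.
move=> hn ha hk hj; have jn := ltn_ord j; split; last first.
  rewrite /cls4; have -> : (j < 2)%N = false by lia. have -> : (j < 3)%N = false by lia. by have -> : (j < a + 2)%N = true by lia.
rewrite (@sum4 _ _ _ _ _ _ _ _ _ (fun i => bullet_edge a k i j) (2) (0) (0) (0)); first last.
+ by apply: (@count_pred _ _ 0 0); [lia | edge_tac a j | lia].
+ by apply: (@count_pred _ _ 0 0); [lia | edge_tac a j | lia].
+ by apply: (@count_pred _ _ 0 0); [lia | edge_tac a j | lia].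
+ by apply: (@count_pred _ _ 0 2); [lia | edge_tac a j | lia].
+ lia.
by [].
Qed.

Lemma b4 (R : nzRingType) n a k (x0 x1 x2 x3 : R) (j : 'I_n) :
  n = (a + 2 * k + 2)%N -> (1 < a)%N -> (0 < k)%N -> (a + 2 <= j)%N ->
  \sum_(i < n) cls4 2 3 (a + 2) x0 x1 x2 x3 i * (bullet_edge a k i j : nat)%:R =
  x0 * (0)%:R + x1 * (1)%:R + x2 * (0)%:R + x3 * (1)%:R /\
  cls4 2 3 (a + 2) x0 x1 x2 x3 j = x3.
Proof.
move=> hn ha hk hj; have jn := ltn_ord j; split; last first.
  rewrite /cls4; have -> : (j < 2)%N = false by lia. have -> : (j < 3)%N = false by lia. by have -> : (j < a + 2)%N = false by lia.
have [p [hp1 hp2 hp3]] : exists p, [/\ (a + 2 <= p < n)%N, p != j :> nat &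
    forall i, (i < n)%N -> ((a + 2 <= i)%N && bullet_edge a k i j) = (p <= i < p.+1)%N].
  case hod: (odd (j - (a + 2))).
    exists (j - 1)%N; split; [lia | lia | move=> i hi].
    rewrite /bullet_edge /glued_edge /K2a_arc /Fk_arc; case: (ltnP i (a + 2)) => ? /=; apply/idP/idP; lia.
  exists j.+1; split; [lia | lia | move=> i hi].
  rewrite /bullet_edge /glued_edge /K2a_arc /Fk_arc; case: (ltnP i (a + 2)) => ? /=; apply/idP/idP; lia.
rewrite (@sum4 _ _ _ _ _ _ _ _ _ (fun i => bullet_edge a k i j) (0) (1) (0) (1)); first last.
+ apply: (@count_pred _ _ p p.+1); [lia | move=> i; apply: hp3; exact: ltn_ord | lia].
+ by apply: (@count_pred _ _ 0 0); [lia | edge_tac a j | lia].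
+ by apply: (@count_pred _ _ 2 3); [lia | edge_tac a j | lia].
+ by apply: (@count_pred _ _ 0 0); [lia | edge_tac a j | lia].
+ lia.
by [].
Qed.

Lemma s0 (R : nzRingType) n a k (x0 x1 x2 x3 : R) (j : 'I_n) :
  n = (a + 2 * k + 2)%N -> (1 < a)%N -> (0 < k)%N -> (j < 1)%N ->
  \sum_(i < n) cls4 1 2 (a + 2) x0 x1 x2 x3 i * (star_edge a k i j : nat)%:R =
  x0 * (0)%:R + x1 * (0)%:R + x2 * (a)%:R + x3 * (2 * k)%:R /\
  cls4 1 2 (a + 2) x0 x1 x2 x3 j = x0.
Proof.
move=> hn ha hk hj; have jn := ltn_ord j; split; last first.
  rewrite /cls4; by rewrite hj.
rewrite (@sum4 _ _ _ _ _ _ _ _ _ (fun i => star_edge a k i j) (0) (0) (a) (2 * k)); first last.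
+ by apply: (@count_pred _ _ (a + 2) n); [lia | edge_tac a j | lia].
+ by apply: (@count_pred _ _ 2 (a + 2)); [lia | edge_tac a j | lia].
+ by apply: (@count_pred _ _ 0 0); [lia | edge_tac a j | lia].
+ by apply: (@count_pred _ _ 0 0); [lia | edge_tac a j | lia].
+ lia.
by [].
Qed.

Lemma s1 (R : nzRingType) n a k (x0 x1 x2 x3 : R) (j : 'I_n) :
  n = (a + 2 * k + 2)%N -> (1 < a)%N -> (0 < k)%N -> (1 <= j < 2)%N ->
  \sum_(i < n) cls4 1 2 (a + 2) x0 x1 x2 x3 i * (star_edge a k i j : nat)%:R =
  x0 * (0)%:R + x1 * (0)%:R + x2 * (a)%:R + x3 * (0)%:R /\
  cls4 1 2 (a + 2) x0 x1 x2 x3 j = x1.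
Proof.
move=> hn ha hk hj; have jn := ltn_ord j; split; last first.
  rewrite /cls4; have -> : (j < 1)%N = false by lia. by have -> : (j < 2)%N = true by lia.
rewrite (@sum4 _ _ _ _ _ _ _ _ _ (fun i => star_edge a k i j) (0) (0) (a) (0)); first last.
+ by apply: (@count_pred _ _ 0 0); [lia | edge_tac a j | lia].
+ by apply: (@count_pred _ _ 2 (a + 2)); [lia | edge_tac a j | lia].
+ by apply: (@count_pred _ _ 0 0); [lia | edge_tac a j | lia].
+ by apply: (@count_pred _ _ 0 0); [lia | edge_tac a j | lia].
+ lia.
by [].
Qed.

Lemma s2 (R : nzRingType) n a k (x0 x1 x2 x3 : R) (j : 'I_n) :
  n = (a + 2 * k + 2)%N -> (1 < a)%N -> (0 < k)%N -> (2 <= j < a + 2)%N ->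
  \sum_(i < n) cls4 1 2 (a + 2) x0 x1 x2 x3 i * (star_edge a k i j : nat)%:R =
  x0 * (1)%:R + x1 * (1)%:R + x2 * (0)%:R + x3 * (0)%:R /\
  cls4 1 2 (a + 2) x0 x1 x2 x3 j = x2.
Proof.
move=> hn ha hk hj; have jn := ltn_ord j; split; last first.
  rewrite /cls4; have -> : (j < 1)%N = false by lia. have -> : (j < 2)%N = false by lia. by have -> : (j < a + 2)%N = true by lia.
rewrite (@sum4 _ _ _ _ _ _ _ _ _ (fun i => star_edge a k i j) (1) (1) (0) (0)); first last.
+ by apply: (@count_pred _ _ 0 0); [lia | edge_tac a j | lia].
+ by apply: (@count_pred _ _ 0 0); [lia | edge_tac a j | lia].
+ by apply: (@count_pred _ _ 1 2); [lia | edge_tac a j | lia].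
+ by apply: (@count_pred _ _ 0 1); [lia | edge_tac a j | lia].
+ lia.
by [].
Qed.

Lemma s3 (R : nzRingType) n a k (x0 x1 x2 x3 : R) (j : 'I_n) :
  n = (a + 2 * k + 2)%N -> (1 < a)%N -> (0 < k)%N -> (a + 2 <= j)%N ->
  \sum_(i < n) cls4 1 2 (a + 2) x0 x1 x2 x3 i * (star_edge a k i j : nat)%:R =
  x0 * (1)%:R + x1 * (0)%:R + x2 * (0)%:R + x3 * (1)%:R /\
  cls4 1 2 (a + 2) x0 x1 x2 x3 j = x3.
Proof.
move=> hn ha hk hj; have jn := ltn_ord j; split; last first.
  rewrite /cls4; have -> : (j < 1)%N = false by lia. have -> : (j < 2)%N = false by lia. by have -> : (j < a + 2)%N = false by lia.
have [p [hp1 hp2 hp3]] : exists p, [/\ (a + 2 <= p < n)%N, p != j :> nat &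
    forall i, (i < n)%N -> ((a + 2 <= i)%N && star_edge a k i j) = (p <= i < p.+1)%N].
  case hod: (odd (j - (a + 2))).
    exists (j - 1)%N; split; [lia | lia | move=> i hi].
    rewrite /star_edge /glued_edge /K2a_arc /Fk_arc; case: (ltnP i (a + 2)) => ? /=; apply/idP/idP; lia.
  exists j.+1; split; [lia | lia | move=> i hi].
  rewrite /star_edge /glued_edge /K2a_arc /Fk_arc; case: (ltnP i (a + 2)) => ? /=; apply/idP/idP; lia.
rewrite (@sum4 _ _ _ _ _ _ _ _ _ (fun i => star_edge a k i j) (1) (0) (0) (1)); first last.
+ apply: (@count_pred _ _ p p.+1); [lia | move=> i; apply: hp3; exact: ltn_ord | lia].
+ by apply: (@count_pred _ _ 0 0); [lia | edge_tac a j | lia].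
+ by apply: (@count_pred _ _ 0 0); [lia | edge_tac a j | lia].
+ by apply: (@count_pred _ _ 0 1); [lia | edge_tac a j | lia].
+ lia.
by [].
Qed.

Theorem lemma2p6 (R : realType) (n a : nat) :
  (6 <= n)%N -> (2 <= a)%N -> odd n = odd a ->
  let k := ((n - a - 2) %/ 2)%N in (1 <= k)%N ->
  spectral_radius (adj_mx R n (bullet_edge a k)) < Num.sqrt ((2 * n - 4)%:R) /\
  spectral_radius (adj_mx R n (star_edge a k)) < Num.sqrt ((2 * n - 4)%:R).
Proof.
move=> h6 ha hpar k hk.
have hn : n = (a + 2 * k + 2)%N by rewrite /k; lia.
clearbody k.
have e24 : (2 * n - 4 = 2 * a + 4 * k)%N by lia.
have hn0 : (0 < 2 * n - 4)%N by lia.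
have ha1 : (1 <= a)%N by apply: ltnW.
set s := Num.sqrt _.
have hs : 0 < s by rewrite sqrtr_gt0 ltr0n.
pose A : R := a%:R; pose K : R := k%:R.
have hA : 2 <= A by rewrite /A ler_nat.
have hK : 1 <= K by rewrite /K ler1n.
have hs2 : s ^+ 2 = 2 * A + 4 * K.
  by rewrite sqr_sqrtr ?ler0n // /A /K e24 natrD !natrM.
have hA1 : (a - 1)%:R = A - 1 by rewrite /A natrB.
split.
-
  have [x [c [y [z [[px pc py pz] [B0 B2 B3 B4]]]]]] := @bullet_w R A K s hA hK hs hs2.
  apply: (@rho_lt R n _ (fun i : 'I_n => cls4 2 3 (a + 2) x c y z i)) => //.
    by move=> i; apply: cls4_pos.
  move=> j /=.
  case: (ltnP j 2) => j1.
    have [-> ->] := @b01 _ _ _ _ x c y z _ hn ha hk j1.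
    rewrite hA1; lra.
  case: (ltnP j 3) => j2.
    have [-> ->] := @b2 _ _ _ _ x c y z _ hn ha hk (introT andP (conj j1 j2)).
    rewrite natrM -/K; lra.
  case: (ltnP j (a + 2)) => j3.
    have [-> ->] := @b3 _ _ _ _ x c y z _ hn ha hk (introT andP (conj j2 j3)).
    lra.
  have [-> ->] := @b4 _ _ _ _ x c y z _ hn ha hk j3.
  lra.
-
  have [x0 [x1 [y [z [[p0 p1 py pz] [S0 S1 S2 S3]]]]]] := @star_w R A K s hA hK hs hs2.
  apply: (@rho_lt R n _ (fun i : 'I_n => cls4 1 2 (a + 2) x0 x1 y z i)) => //.
    by move=> i; apply: cls4_pos.
  move=> j /=.
  case: (ltnP j 1) => j1.
    have [-> ->] := @s0 _ _ _ _ x0 x1 y z _ hn ha hk j1.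
    rewrite natrM -/K -/A; lra.
  case: (ltnP j 2) => j2.
    have [-> ->] := @s1 _ _ _ _ x0 x1 y z _ hn ha hk (introT andP (conj j1 j2)).
    rewrite -/A; lra.
  case: (ltnP j (a + 2)) => j3.
    have [-> ->] := @s2 _ _ _ _ x0 x1 y z _ hn ha hk (introT andP (conj j2 j3)).
    lra.
  have [-> ->] := @s3 _ _ _ _ x0 x1 y z _ hn ha hk j3.
  lra.
Qed.
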